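(* Let $k\ge 3$ be an integer. Let $n=k(k+1)+2$ and let $Z_k$ be the $k$-path power with $k$-path layout $\langle v_1,\ldots,v_n\rangle$. Let $m=(2k-1)(k+1)+1$, let $J_k$ be the $k$-path power with $k$-path layout $\langle z_1,\ldots,z_m\rangle$, and let $g=k^2-1$. Then every proper induced subgraph of $Z_k$ is isomorphic to an induced subgraph of $J_k-z_g$.
   Context: For an integer $k\ge 1$ and an ordering $\langle x_1,\ldots,x_n\rangle$ of $n$ vertices, the $k$-path power with $k$-path layout $\langle x_1,\ldots,x_n\rangle$ is the graph on $\{x_1,\ldots,x_n\}$ in which, for $i<j$, $x_i$ and $x_j$ are adjacent if and only if $j-i\le k$. $J_k-z_g$ denotes $J_k$ with the vertex $z_g$ deleted. A proper induced subgraph is an induced subgraph on a proper subset of the vertex set. *)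

(* Defs.v *)
From mathcomp Require Import all_boot.
Set Implicit Arguments. Unset Strict Implicit. Unset Printing Implicit Defensive.

(* The k-path power with k-path layout <x_1,...,x_n>: vertices are 'I_n,
   vertex x_i (1-based) being the ordinal i-1; x_i, x_j (i<>j) adjacent iff |i-j| <= k. *)
Definition path_power_adj (k n : nat) : rel 'I_n :=
  fun i j => [&& i != j, (i <= j + k) & (j <= i + k)].

Arguments path_power_adj : clear implicits.

Definition embeds_induced (T U : finType) (eT : rel T) (eU : rel U)
    (S : {set T}) (A : {set U}) : Prop :=
  exists f : T -> U,
    [/\ {in S &, injective f},
        {in S, forall x, f x \in A} &
        {in S &, forall x y, eU (f x) (f y) = eT x y}].

(* Main.v *)
Require Import Defs.
From mathcomp Require Import all_boot.
From mathcomp Require Import zify.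

Theorem mainTheorem2 (k : nat) (hk : 3 <= k)
    (S : {set 'I_(k * (k + 1) + 2)}) (hS : S \proper [set: 'I_(k * (k + 1) + 2)]) :
  embeds_induced (path_power_adj k (k * (k + 1) + 2))
                 (path_power_adj k ((2 * k - 1) * (k + 1) + 1))
                 S [set z : 'I_((2 * k - 1) * (k + 1) + 1) | nat_of_ord z != k ^ 2 - 2].
Proof.
move/properP: hS => [_ [v _ vS]].
have hK : k ^ 2 = k * k by rewrite expnS expn1.
have hK3 : 3 * k <= k ^ 2 by rewrite hK leq_mul2r hk orbT.
have hn : k * (k + 1) + 2 = k ^ 2 + k + 2 by rewrite hK; lia.
have hm : (2 * k - 1) * (k + 1) + 1 = 2 * k ^ 2 + k by rewrite hK; nia.
have m0 : 0 < (2 * k - 1) * (k + 1) + 1 by rewrite addn1.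
set m := (2 * k - 1) * (k + 1) + 1 in m0 hm *.
set n := k * (k + 1) + 2 in S v vS hn *.
set K := k ^ 2 in hK hK3 hn hm *.
pose z0 : 'I_m := Ordinal m0.
pose h (a : nat) := if v <= K - 2 then a + (K - 2 - v)
                    else (n - 1 - a) + (K - 2 - (n - 1 - v)).
have hv := ltn_ord v.
have key : forall x : 'I_n, x \in S ->
   [/\ h x < m, h x != K - 2 & (x : nat) != v].
  move=> x xS; have hx := ltn_ord x.
  have xv : (x : nat) != v.
    by apply/negP => /eqP/val_inj E; rewrite -E xS in vS.
  rewrite /h; case: ifP => hc; split => //; lia.
have vE : forall x : 'I_n, x \in S -> val (insubd z0 (h x) : 'I_m) = h x.
  by move=> x /key [hl _ _]; rewrite val_insubd hl.
exists (fun x : 'I_n => insubd z0 (h x)); split.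
- move=> x y xS yS /(congr1 val); rewrite !vE //.
  have := key _ xS; have := key _ yS => -[_ _ _] [_ _ _].
  move=> E; apply: ord_inj; move: E; rewrite /h; have := ltn_ord x; have := ltn_ord y.
  case: ifP => _; lia.
- by move=> x xS; rewrite inE vE //; case: (key _ xS).
- move=> x y xS yS; have nE : forall p (a b : 'I_p), (a == b) = (nat_of_ord a == nat_of_ord b) by [].
  rewrite /path_power_adj !nE !vE //.
  have := ltn_ord x; have := ltn_ord y; rewrite /h; case: ifP => _ ? ?;
  apply/and3P/and3P => -[/eqP a b c]; split; try (apply/eqP); lia.
Qed.
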